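(* Let $G$ be a group with finite symmetric generating set $Z$, let $X,Y$ be finite sets equipped with maps to $G$, and let $K\ge0$. Then the set $$\mathcal{M}=\{(U,V)\in B^*\mid (U,V)\text{ is a } K\text{-synchronous BCD pair in }(G,d_Z)\}$$ is a regular language over the alphabet $B$.
   Context: Elements of $X$ and $Y$ are regarded as elements of $G$ via the given maps. Let $\$_X\notin X$, $\$_Y\notin Y$ be padding symbols interpreted as the identity of $G$, $X^{\$}=X\cup\{\$_X\}$, $Y^{\$}=Y\cup\{\$_Y\}$ and $B=X^{\$}\times Y^{\$}$ (a finite alphabet). A word over $B$ is written $(U,V)$ with $U\in(X^{\$})^*$, $V\in(Y^{\$})^*$ of the same length. For a word $W$, $W_j$ is its prefix of length $j$ ($W_j=W$ if $j>\ell(W)$). $(U,V)\in B^*$ is a $K$-synchronous BCD pair in $(G,d_Z)$ if there exists $g\in G$ with $|g|_Z\le K$ such that $gU=_GVg$ and $|V_j^{-1}gU_j|_Z\le K$ for all $j=0,1,2,\dots$. *)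

(* Defs.v *)
From HB Require Import structures.
From mathcomp Require Import ssreflect ssrfun ssrbool eqtype ssrnat seq choice.
From mathcomp Require Import fintype bigop monoid.

Set Implicit Arguments.
Unset Strict Implicit.
Unset Printing Implicit Defensive.

Local Open Scope group_scope.

Section Defs.
Variable G : groupType.

Definition gprod (s : seq G) : G := \prod_(x <- s) x.

Definition symmetric_set (Z : seq G) : Prop :=
  forall z, z \in Z -> z^-1 \in Z.

Definition generates (Z : seq G) : Prop :=
  forall g : G, exists s : seq G,
    all (fun x => (x \in Z) || (x^-1 \in Z)) s /\ g = gprod s.

Definition wlen_le (Z : seq G) (g : G) (K : nat) : Prop :=
  exists s : seq G, all (fun x => x \in Z) s /\ size s <= K /\ gprod s = g.

(* letters of X^$ = option X, with None the padding symbol $_X interpreted as 1 *)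
Definition letter (X : Type) (f : X -> G) (a : option X) : G :=
  if a is Some x then f x else 1.

Definition evalw (X : Type) (f : X -> G) (U : seq (option X)) : G :=
  gprod (map (letter f) U).

(* (U,V) in B^*, B = X^$ * Y^$, given as a word w : seq B with U = map fst w,
   V = map snd w; prefixes W_j = take j W. *)
Definition sync_BCD_pair (Z : seq G) (X Y : Type) (fX : X -> G) (fY : Y -> G)
    (K : nat) (w : seq (option X * option Y)) : Prop :=
  let U := map fst w in
  let V := map snd w in
  exists g : G,
    [/\ wlen_le Z g K,
        g * evalw fX U = evalw fY V * g &
        forall j : nat,
          wlen_le Z ((evalw fY (take j V))^-1 * g * evalw fX (take j U)) K].

End Defs.

Definition regular_language (A : finType) (L : seq A -> Prop) : Prop :=
  exists (S : finType) (s0 : S) (delta : S -> A -> S) (F : pred S),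
    forall w : seq A, L w <-> F (foldl delta s0 w).

(* Main.v *)
Require Import Defs.
From HB Require Import structures.
From mathcomp Require Import ssreflect ssrfun ssrbool eqtype ssrnat seq choice.
From mathcomp Require Import fintype bigop monoid finfun tuple.
From Stdlib Require Import ClassicalEpsilon.

Set Implicit Arguments.
Unset Strict Implicit.
Unset Printing Implicit Defensive.

Local Open Scope group_scope.

Section Proof.
Variable G : groupType.
Variable Z : seq G.
Variables X Y : finType.
Variable fX : X -> G.
Variable fY : Y -> G.
Variable K : nat.

Lemma gprod_cons (x : G) s : gprod (x :: s) = x * gprod s.
Proof. by rewrite /gprod big_cons. Qed.

Lemma gprod_nil : gprod ([::] : seq G) = 1.
Proof. by rewrite /gprod big_nil. Qed.

Definition T := (K.-tuple (option (seq_sub Z)))%type.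
Definition zl (o : option (seq_sub Z)) : G := odflt 1 (omap val o).
Definition ev (t : T) : G := gprod (map zl t).

Lemma ev_seq_wlen (s : seq (option (seq_sub Z))) :
  exists s' : seq G, all (fun x => x \in Z) s' /\ size s' <= size s /\
     gprod s' = gprod (map zl s).
Proof.
elim: s => [|o s [s' [H1 [H2 H3]]]].
  by exists [::].
case: o => [u|] /=.
  exists (val u :: s'); rewrite /= (valP u) H1 /= ltnS H2; split=> //; split=> //.
  by rewrite !gprod_cons H3.
exists s'; split=> //; split; first by apply: leq_trans H2 _.
by rewrite gprod_cons /= mul1g.
Qed.

Lemma ev_wlen (t : T) : wlen_le Z (ev t) K.
Proof.
have [s' [H1 [H2 H3]]] := ev_seq_wlen t.
by exists s'; split=> //; split=> //; rewrite size_tuple in H2.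
Qed.

Lemma wlen_ev (g : G) : wlen_le Z g K -> exists t : T, ev t = g.
Proof.
move=> [s [Hs [Hk Hg]]].
pose l : seq (option (seq_sub Z)) := map (fun x : G => insub x) s ++ nseq (K - size s)%N None.
have Hl : size l == K by rewrite size_cat size_map size_nseq subnKC.
exists (Tuple Hl); rewrite /ev /= /l map_cat /gprod big_cat /=.
rewrite -Hg.
have -> : \prod_(x <- map zl (nseq (K - size s) None)) x = (1 : G).
  elim: (K - size s) => [|n IH]; first by rewrite big_nil.
  by rewrite /= big_cons IH mul1g.
rewrite mulg1 -map_comp.
move: Hs; clear Hl Hk Hg l; elim: s => [|x s IH] /=; first by rewrite /gprod !big_nil.
move=> /andP [Hx Hs]; rewrite big_cons gprod_cons -/(gprod _) -IH //.
rewrite /zl /=; case: insubP => [u _ Hu|]; first by rewrite /= Hu.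
by rewrite Hx.
Qed.

Definition pb (P : Prop) : bool :=
  if excluded_middle_informative P then true else false.

Lemma pbP (P : Prop) : pb P <-> P.
Proof. by rewrite /pb; case: excluded_middle_informative. Qed.

Definition rep (h : G) : option T :=
  match excluded_middle_informative (exists t : T, ev t = h) with
  | left H => Some (proj1_sig (constructive_indefinite_description _ H))
  | right _ => None
  end.

Lemma rep_some h r : rep h = Some r -> ev r = h.
Proof.
rewrite /rep; case: excluded_middle_informative => // H [<-].
by case: constructive_indefinite_description.
Qed.

Lemma rep_wlen h : wlen_le Z h K -> exists r, rep h = Some r.
Proof.
move=> /wlen_ev Hh; rewrite /rep; case: excluded_middle_informative => // H.
by eexists.
Qed.

Definition A := (option X * option Y)%type.

Definition step (r : option T) (a : A) : option T :=
  if r is Some r then rep ((letter fY a.2)^-1 * ev r * letter fX a.1) else None.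

Definition run (r : option T) (w : seq A) := foldl step r w.

Lemma run_none w : foldl step None w = None.
Proof. by elim: w. Qed.

Definition hj (w : seq A) (g : G) j :=
  (evalw fY (take j (map snd w)))^-1 * g * evalw fX (take j (map fst w)).

Lemma hj0 w g : hj w g 0 = g.
Proof. by rewrite /hj /evalw !take0 /gprod !big_nil invg1 mul1g mulg1. Qed.

Lemma hj_cons a w g j :
  hj (a :: w) g j.+1 = hj w ((letter fY a.2)^-1 * g * letter fX a.1) j.
Proof.
rewrite /hj /evalw /= !gprod_cons invgM.
by rewrite !mulgA.
Qed.

Lemma hj_nil g j : hj [::] g j = g.
Proof. by rewrite /hj /evalw !take_oversize // /gprod !big_nil invg1 mul1g mulg1. Qed.

Lemma run_some w : forall r0 r, run (Some r0) w = Some r ->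
  ev r = hj w (ev r0) (size w) /\ forall j, wlen_le Z (hj w (ev r0) j) K.
Proof.
elim: w => [|a w IH] r0 r /=.
  move=> [<-]; rewrite hj_nil; split=> // j; rewrite hj_nil; exact: ev_wlen.
case E: (rep _) => [r1|]; last first.
  suff -> : run None w = None by []. by clear; elim: w.

move=> /IH [H1 H2]; have E1 := rep_some E.
rewrite hj_cons -E1; split=> // [[|j]]; first by rewrite hj0; exact: ev_wlen.
by rewrite hj_cons -E1.
Qed.

Lemma run_ex w : forall r0, (forall j, wlen_le Z (hj w (ev r0) j) K) ->
  exists r, run (Some r0) w = Some r.
Proof.
elim: w => [|a w IH] r0 H /=; first by eexists.
have := H 1%N; rewrite hj_cons hj0 => /rep_wlen [r1 E]; rewrite E.
have E1 := rep_some E.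
apply: IH => j; rewrite E1 -hj_cons; exact: H.
Qed.

Definition delta (s : {ffun T -> option T}) (a : A) : {ffun T -> option T} :=
  [ffun t => step (s t) a].

Lemma foldl_delta w : forall s, foldl delta s w = [ffun t => run (s t) w].
Proof.
elim: w => [|a w IH] s /=; first by apply/ffunP => t; rewrite ffunE.
rewrite IH; apply/ffunP => t; by rewrite !ffunE.
Qed.

Lemma hj_big w g j : size w <= j -> hj w g j = hj w g (size w).
Proof.
move=> Hj; rewrite /hj !take_oversize ?size_map //.
Qed.

End Proof.

Theorem lemma5p11 (G : groupType) (Z : seq G)
    (hsym : symmetric_set Z) (hgen : generates Z)
    (X Y : finType) (fX : X -> G) (fY : Y -> G) (K : nat) :
  regular_language
    (fun w : seq (option X * option Y) => sync_BCD_pair Z fX fY K w).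
Proof.
exists {ffun T Z K -> option (T Z K)}.
exists [ffun t => Some t], (@delta G Z X Y fX fY K).
exists (fun s : {ffun T Z K -> option (T Z K)} => pb (exists t r, s t = Some r /\ ev r = ev t)).
move=> w; rewrite foldl_delta; split.
- move=> [g [Hg Heq Hall]].
  have [t Ht] := wlen_ev Hg.
  have [r Hr] : exists r, run fX fY (Some t) w = Some r.
    by apply: run_ex => j; rewrite Ht; exact: Hall.
  apply/pbP; exists t, r; rewrite !ffunE; split=> //.
  have [H1 _] := run_some Hr.
  rewrite H1 Ht /hj !take_oversize ?size_map //.
  by rewrite -mulgA Heq mulgA mulVg mul1g.
- move=> /pbP [t [r [Hr Hev]]]; rewrite !ffunE in Hr.
  have [H1 H2] := run_some Hr.
  exists (ev t); split; first exact: ev_wlen.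
  + move: H1; rewrite Hev /hj !take_oversize ?size_map // => H.
    by rewrite {2}H !mulgA mulgV mul1g.
  + exact: H2.
Qed.
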